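(* Let $n\geq 1$ and $k\geq 0$ be integers, let $0\leq i\leq n-1$ and $0\leq j\leq k$, and define \[ i'=\Big\lfloor \frac{(n+1)k-(k+1)i-j}{k+1}\Big\rfloor,\qquad j'=(n+1)k-(k+1)i-j-(k+1)i'. \] If $\pi\in\Gamma^k(n,i;j)$, then $\varphi(\pi)\in\Gamma^k(n,i';j')$.
   Context: For a permutation $\pi=\pi_1\cdots\pi_n$ of $[n]=\{1,\dots,n\}$, $\mathrm{des}(\pi)$ is the number of $m\in[n-1]$ with $\pi_m>\pi_{m+1}$, and $\mathrm{maxdrop}(\pi)=\max\{m-\pi_m:1\leq m\leq n\}$. $A_{n,k}$ is the set of permutations of $[n]$ with $\mathrm{maxdrop}(\pi)\leq k$. For $0\le i\le n-1$ and $0\le j\le k$, $\Gamma^k(n,i;j)$ is the set of $\pi\in A_{n,k}$ with $\mathrm{des}(\pi)=i$ and $\pi_n=n-k+j$. For a permutation $\sigma$ of $[n-1]$ and $1\leq r\leq n$, $\sigma\leftarrow r$ is the permutation of $[n]$ obtained by increasing every entry of $\sigma$ that is $\geq r$ by $1$ and then appending $r$ at the end. The map $\varphi:A_{n,k}\to A_{n,k}$ is defined recursively: $\varphi(1)=1$; for $n\geq 2$ and $\pi\in A_{n,k}$, let $i=\mathrm{des}(\pi)$, $j=\pi_n-n+k$, $i'=\lfloor((n+1)k-(k+1)i-j)/(k+1)\rfloor$, $j'=(n+1)k-(k+1)i-j-(k+1)i'$, let $\pi'$ be the permutation of $[n-1]$ order-isomorphic to $\pi_1\cdots\pi_{n-1}$,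 and set $\varphi(\pi)=\varphi(\pi')\leftarrow(n-k+j')$. *)

(* Defs.v *)
From mathcomp Require Import all_boot all_order all_algebra.
Set Implicit Arguments. Unset Strict Implicit. Unset Printing Implicit Defensive.
Import Order.TTheory GRing.Theory Num.Theory.

(* A permutation pi = pi_1 ... pi_n of [n] is represented by the sequence
   [:: pi_1; ...; pi_n] of naturals; pi_m = nth 0 s (m-1). *)
Definition is_perm (n : nat) (s : seq nat) : bool := perm_eq s (iota 1 n).

Definition des (s : seq nat) : nat :=
  \sum_(0 <= m < (size s).-1) (nth 0 s m.+1 < nth 0 s m : nat).

(* maxdrop = max_{1<=m<=n} (m - pi_m).  Since sum_m (m - pi_m) = 0 for a
   permutation, this maximum is >= 0, so truncated nat subtraction gives the
   same value on permutations (n >= 1). *)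
Definition maxdrop (s : seq nat) : nat :=
  \max_(m < size s) (m.+1 - nth 0 s m).

Definition A_nk (n k : nat) (s : seq nat) : bool :=
  is_perm n s && (maxdrop s <= k).

Definition Gamma (k n : nat) (i j : int) (s : seq nat) : bool :=
  [&& A_nk n k s, ((Posz (des s)) == i) & ((Posz (last 0 s)) == (Posz n) - (Posz k) + j)%R].

Definition ins (s : seq nat) (r : nat) : seq nat :=
  rcons [seq (if r <= x then x.+1 else x) | x <- s] r.

(* the permutation order-isomorphic to a sequence t of distinct naturals *)
Definition std (t : seq nat) : seq nat :=
  [seq count (fun y => y <= x) t | x <- t].

(* i' and j' as integers; floor division by k+1 > 0 is intdiv's %/ *)
Definition bigN (n k : nat) (i j : int) : int :=
  ((Posz (n.+1)) * (Posz k) - (Posz (k.+1)) * i - j)%R.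
Definition iprime (n k : nat) (i j : int) : int := (bigN n k i j %/ (Posz (k.+1)))%Z.
Definition jprime (n k : nat) (i j : int) : int :=
  (bigN n k i j - (Posz (k.+1)) * iprime n k i j)%R.

Definition int_to_nat (z : int) : nat :=
  match z with Posz m => m | Negz _ => 0 end.

Fixpoint phi_n (k n : nat) (s : seq nat) : seq nat :=
  match n with
  | 0 => [::]
  | n'.+1 =>
      if n' == 0 then [:: 1] else
      let i := (Posz (des s)) in
      let j := ((Posz (last 0 s)) - (Posz n) + (Posz k))%R in
      let j' := jprime n k i j in
      ins (phi_n k n' (std (take n' s))) (int_to_nat ((Posz n) - (Posz k) + j')%R)
  end.

Definition phi (k : nat) (s : seq nat) : seq nat := phi_n k (size s) s.

(* Main.v *)
Require Import Defs.
From mathcomp Require Import all_boot all_order all_algebra.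
From mathcomp Require Import zify ring.
Set Implicit Arguments. Unset Strict Implicit. Unset Printing Implicit Defensive.
Import Order.TTheory GRing.Theory Num.Theory.

Lemma is_permP n s : is_perm n s = [&& uniq s, size s == n & all (fun x => 0 < x <= n) s].
Proof.
apply/idP/idP.
- move=> H; rewrite (perm_uniq H) iota_uniq (perm_size H) size_iota eqxx /=.
  apply/allP => x; rewrite (perm_mem H) mem_iota => /andP[H1 H2]; apply/andP; split; lia.
- case/and3P => U /eqP Hs /allP A.
  have S1 : {subset s <= iota 1 n}.
    move=> x Hx; rewrite mem_iota; have /andP[??] := A x Hx; apply/andP; split; lia.
  have S2 : size (iota 1 n) <= size s by rewrite size_iota Hs.
  have [_ E] := uniq_min_size U S1 S2.
  apply: uniq_perm => //; exact: iota_uniq.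
Qed.

Lemma count_le_iota n x : x <= n -> count (fun y => y <= x) (iota 1 n) = x.
Proof.
move=> Hx. rewrite -(subnKC Hx) iotaD count_cat.
rewrite (@eq_in_count _ _ predT (iota 1 x)); last first.
  by move=> y; rewrite mem_iota => /andP[_ H] /=; apply/idP; lia.
rewrite count_predT size_iota.
rewrite (@eq_in_count _ _ pred0 (iota (1 + x) (n - x))); last first.
  by move=> y; rewrite mem_iota => /andP[H _] /=; apply/negbTE; lia.
by rewrite count_pred0 addn0.
Qed.

Lemma std_rcons t p n : is_perm n (rcons t p) -> std t = map (fun x => x - (p < x)) t.
Proof.
move=> H. have Hp := H. rewrite is_permP in Hp; case/and3P: Hp => U _ /allP A.
rewrite /std; apply eq_in_map => x Hx.
have xp : x != p.
  by apply: contraTneq Hx => ->; rewrite rcons_uniq in U; case/andP: U.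
have: count (fun y => y <= x) (rcons t p) = x.
  have Hc := H; move/permP: Hc => Hc.
  have E := Hc (fun y => y <= x); rewrite E count_le_iota //.
  have Hx' : x \in rcons t p by rewrite mem_rcons in_cons Hx orbT.
  by have /andP[_ ?] := A x Hx'.
rewrite -cats1 count_cat /= addn0.
have -> : (p <= x) = (p < x) by rewrite leq_eqVlt eq_sym (negbTE xp).
by case: (p < x) => /=; lia.
Qed.

Lemma des_rcons t p : 0 < size t -> des (rcons t p) = des t + (p < last 0 t).
Proof.
move=> Ht. have Hl := nth_last 0 t. rewrite /des size_rcons /=.
move: Ht Hl; case E: (size t) => [|n1] // _ Hl /=.
rewrite big_nat_recr //=; congr (_ + _).
  apply: eq_big_nat => m /andP[_ Hm]; rewrite !nth_rcons E.
  have -> : m.+1 < n1.+1 by lia.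
  by have -> : m < n1.+1 by lia.
by rewrite !nth_rcons E ltnn eqxx ltnSn Hl.
Qed.

Lemma des_map f t : {in t &, forall a b, (f b < f a) = (b < a)} -> des (map f t) = des t.
Proof.
move=> Hf; rewrite /des size_map; apply: eq_big_nat => m /andP[_ Hm].
have H2 : m.+1 < size t by move: Hm; case: (size t) => [|z] //=; lia.
have H1 : m < size t by lia.
by rewrite !(nth_map 0) // Hf // mem_nth.
Qed.

Lemma maxdropP s k : reflect (forall m, m < size s -> m.+1 - nth 0 s m <= k) (maxdrop s <= k).
Proof.
apply: (iffP (bigmax_leqP _ _ _)) => H.
  by move=> m Hm; have := H (Ordinal Hm) isT.
by move=> [m Hm] _; exact: H.
Qed.
Lemma rcons_facts n k t p : A_nk n.+1 k (rcons t p) ->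
  size t = n /\ 0 < p <= n.+1 /\ p \notin t /\ uniq t /\
   {in t, forall x, 0 < x <= n.+1} /\ n.+1 - p <= k /\
   forall m, m < n -> m.+1 - nth 0 t m <= k.
Proof.
case/andP; rewrite is_permP => /and3P[U /eqP S /allP A] /maxdropP M.
rewrite size_rcons in S M; case: S => S.
rewrite rcons_uniq in U; case/andP: U => pt U.
have Hp : 0 < p <= n.+1 by apply: A; rewrite mem_rcons in_cons eqxx.
have A' : {in t, forall x, 0 < x <= n.+1}.
  by move=> x Hx; apply: A; rewrite mem_rcons in_cons Hx orbT.
have Hk : n.+1 - p <= k.
  by have := M n; rewrite nth_rcons S ltnn eqxx; apply; lia.
have M' : forall m, m < n -> m.+1 - nth 0 t m <= k.
  by move=> m Hm; have := M m; rewrite nth_rcons S Hm; apply; lia.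
by [].
Qed.

Lemma std_A n k t p : A_nk n.+1 k (rcons t p) -> A_nk n k (map (fun x => x - (p < x)) t).
Proof.
case/rcons_facts => S [Hp [pt [U [A [Hk M]]]]].
apply/andP; split.
- rewrite is_permP size_map S eqxx /=; apply/andP; split.
  + rewrite map_inj_in_uniq // => a b Ha Hb.
    have ap : a != p by apply: contraNneq pt => <-.
    have bp : b != p by apply: contraNneq pt => <-.
    move: ap bp; case: (ltngtP p a); case: (ltngtP p b) => //= *; lia.
  + apply/allP => y /mapP[x Hx ->].
    have xp : x != p by apply: contraNneq pt => <-.
    have := A x Hx; move: xp; case: (ltngtP p x) => //= *; lia.
- apply/maxdropP => m; rewrite size_map S => Hm.
  rewrite (nth_map 0); last by lia.
  have := M m Hm.
  have Hx : nth 0 t m \in t by apply: mem_nth; rewrite S.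
  move: Hx; case: (ltngtP p (nth 0 t m)) => //= *; lia.
Qed.

Lemma ins_A n k s r : A_nk n k s -> 0 < r <= n.+1 -> n.+1 - r <= k -> A_nk n.+1 k (ins s r).
Proof.
case/andP; rewrite is_permP => /and3P[U /eqP S /allP A] /maxdropP M Hr Hk.
apply/andP; split.
- rewrite is_permP /ins size_rcons size_map S eqxx /= rcons_uniq.
  have inj : injective (fun x => if r <= x then x.+1 else x).
    move=> a b; case: (leqP r a); case: (leqP r b) => /= *; lia.
  rewrite (map_inj_uniq inj) U andbT; apply/andP; split.
  + apply/mapP => [[x _]]; case: (leqP r x) => *; lia.
  + apply/allP => y; rewrite mem_rcons in_cons => /orP[/eqP -> //|/mapP[x Hx ->]].
    have := A x Hx; case: (leqP r x) => *; lia.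
- apply/maxdropP => m; rewrite /ins size_rcons size_map S nth_rcons size_map S => Hm.
  case: (ltnP m n) => Hmn.
  + rewrite (nth_map 0); last by lia.
    have Hm' : m < size s by rewrite S.
    have := M m Hm'.
    case: (leqP r (nth 0 s m)) => *; lia.
  + have -> : m == n by apply/eqP; lia.
    have -> : m = n by lia.
    done.
Qed.
Local Open Scope ring_scope.

Lemma ij_char n k (i j : int) :
  bigN n k i j = Posz k.+1 * iprime n k i j + jprime n k i j /\
  0 <= jprime n k i j /\ jprime n k i j <= Posz k.
Proof.
have E : jprime n k i j = (bigN n k i j %% Posz k.+1)%Z.
  rewrite /jprime /iprime {1}(divz_eq (bigN n k i j) (Posz k.+1)).
  by rewrite mulrC addrAC subrr add0r.
split; first by rewrite /jprime; ring.
rewrite E; split; first exact: modz_ge0.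
have := @ltz_pmod (bigN n k i j) (Posz k.+1) isT; lia.
Qed.

Lemma arith k n (Dt p q : nat) (ip jp ip0 jp0 : int) :
 bigN n.+2 k (Posz (Dt + (p < q))%N) (Posz p - Posz n.+2 + Posz k) = Posz k.+1 * ip + jp ->
 0 <= jp <= Posz k ->
 bigN n.+1 k (Posz Dt) (Posz (q - (p < q))%N - Posz n.+1 + Posz k) = Posz k.+1 * ip0 + jp0 ->
 0 <= jp0 <= Posz k ->
 (0 < p <= n.+2)%N -> (0 < q <= n.+2)%N -> p != q -> (n.+2 - p <= k)%N -> (n.+1 - q <= k)%N ->
 1 <= Posz n.+2 - Posz k + jp /\
 forall r l : nat, Posz r = Posz n.+2 - Posz k + jp -> Posz l = Posz n.+1 - Posz k + jp0 ->
   ip = ip0 + Posz (r <= l)%N.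
Proof.
rewrite /bigN => E1 /andP[j1 j2] E0 /andP[j3 j4] /andP[p1 p2] /andP[q1 q2] pq pk qk.
split.
  have : Posz k.+1 * (Posz n.+2 - Posz Dt - Posz (p < q)%N - ip) = jp + Posz p by lia.
  set m := (_ - ip) => Hm.
  have : 1 <= m by nia.
  nia.
move=> r l Hr Hl.
have Hx : Posz k.+1 * (ip - ip0) = Posz k - Posz (k.+1 * (p < q))%N + Posz (q - (p<q))%N - Posz p + 1 + jp0 - jp.
  move: E1 E0; case: (p < q)%N; rewrite /= ?subn0 ?muln0 ?muln1; lia.
move: Hx; case: (ssrnat.ltngtP p q) => H //=; rewrite ?muln1 ?muln0 => Hx.
- have : 0 <= ip - ip0 <= 1 by nia.
  case: (ssrnat.leqP r l) => /= ? ?; (have [E|E] : ip = ip0 \/ ip = ip0 + 1 by lia); rewrite E in Hx *; lia.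
- have : 0 <= ip - ip0 <= 1 by nia.
  case: (ssrnat.leqP r l) => /= ? ?; (have [E|E] : ip = ip0 \/ ip = ip0 + 1 by lia); rewrite E in Hx *; lia.
- by move/eqP: pq.
Qed.
Local Close Scope ring_scope.

Lemma phi_n_step k n s : phi_n k n.+2 s =
  ins (phi_n k n.+1 (std (take n.+1 s)))
    (int_to_nat (Posz n.+2 - Posz k + jprime n.+2 k (Posz (des s)) (Posz (last 0 s) - Posz n.+2 + Posz k))%R).
Proof. by []. Qed.

Lemma last_map_ne f (s : seq nat) : 0 < size s -> last 0 (map f s) = f (last 0 s).
Proof. by case/lastP: s => // s x _; rewrite map_rcons !last_rcons. Qed.

Lemma int_to_natK (z : int) : (0 <= z)%R -> Posz (int_to_nat z) = z.
Proof. by case: z. Qed.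

Lemma main k n : 0 < n -> forall s, A_nk n k s ->
  Gamma k n (iprime n k (Posz (des s)) (Posz (last 0 s) - Posz n + Posz k)%R)
            (jprime n k (Posz (des s)) (Posz (last 0 s) - Posz n + Posz k)%R) (phi_n k n s).
Proof.
elim: n => // n IH _ s As.
case/lastP: s As => [|t p] As.
  by move: As => /andP[]; rewrite is_permP => /and3P[_ /eqP].
case: n IH As => [|n] IH As.
- have [St [Hp [pt [U [A [Hk M]]]]]] := rcons_facts As.
  move: St; case: t {pt U A M As} => // _.
  have -> : p = 1 by lia.
  have [E [j1 j2]] := ij_char 1 k (Posz (des [:: 1])) (Posz (last 0 [:: 1]) - Posz 1 + Posz k)%R.
  move: E j1 j2.
  set ip := iprime _ _ _ _; set jp := jprime _ _ _ _ => E j1 j2.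
  have Ed : des [:: 1] = 0 by rewrite /des big_geq.
  rewrite /bigN Ed /= in E.
  have Hip : ip = 0%R by nia.
  rewrite /Gamma /=; apply/and3P; split.
  + apply/andP; split; first by [].
    by apply/maxdropP => m /=; case: m.
  + by rewrite Ed Hip.
  + apply/eqP; rewrite Hip in E; lia.
- have [St [Hp [pt [U [A [Hk M]]]]]] := rcons_facts As.
  have Hst : std (take n.+1 (rcons t p)) = map (fun x => x - (p < x)) t.
    by rewrite -cats1 take_size_cat // (std_rcons (proj1 (andP As))).
  rewrite phi_n_step Hst.
  have Aσ := std_A As.
  have := IH isT _ Aσ.
  set σ := map _ t.
  set τ := phi_n k n.+1 σ.
  case/and3P => Aτ /eqP Dτ /eqP Lτ.
  have tne : 0 < size t by rewrite St.
  set q := last 0 t.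
  have qt : q \in t by rewrite /q -nth_last; apply: mem_nth; rewrite St.
  have qp : p != q by apply: contraNneq pt => ->.
  have Hq := A q qt.
  have Hqk : n.+1 - q <= k by have := M n (ltnSn n); rewrite (_ : nth 0 t n = q) // /q -nth_last St.
  have Dσ : des σ = des t.
    apply: des_map => a b Ha Hb.
    have ap : a != p by apply: contraNneq pt => <-.
    have bp : b != p by apply: contraNneq pt => <-.
    move: ap bp; case: (ltngtP p a); case: (ltngtP p b) => //= *; apply/idP/idP; lia.
  have Lσ : last 0 σ = q - (p < q) by rewrite /σ last_map_ne.
  have Ds : des (rcons t p) = des t + (p < q) by rewrite des_rcons.
  rewrite Dσ Lσ in Dτ Lτ.
  rewrite last_rcons Ds.
  have [E1 [j1 j2]] := ij_char n.+2 k (Posz (des t + (p < q))) (Posz p - Posz n.+2 + Posz k)%R.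
  have [E0 [j3 j4]] := ij_char n.+1 k (Posz (des t)) (Posz (q - (p < q)) - Posz n.+1 + Posz k)%R.
  move: E1 j1 j2 E0 j3 j4 Dτ Lτ.
  set ip := iprime n.+2 _ _ _; set jp := jprime n.+2 _ _ _.
  set ip0 := iprime n.+1 _ _ _; set jp0 := jprime n.+1 _ _ _.
  move=> E1 j1 j2 E0 j3 j4 Dτ Lτ.
  have [R1 Rip] := arith E1 (introT andP (conj j1 j2)) E0 (introT andP (conj j3 j4))
     Hp Hq qp Hk Hqk.
  set R := (Posz n.+2 - Posz k + jp)%R.
  have HR : Posz (int_to_nat R) = R by apply: int_to_natK; rewrite /R; lia.
  set r := int_to_nat R in HR *.
  have Sτ : size τ = n.+1 by move: Aτ => /andP[]; rewrite is_permP => /and3P[_ /eqP].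
  set l := last 0 τ in Lτ.
  rewrite /Gamma; apply/and3P; split.
  + apply: ins_A => //; try (apply/andP; split); lia.
  + rewrite /ins des_rcons; last by rewrite size_map Sτ.
    rewrite des_map; last first.
      move=> a b _ _; case: (leqP r a); case: (leqP r b) => /= *; apply/idP/idP; lia.
    rewrite last_map_ne ?Sτ //.
    have -> : (r < (if r <= l then l.+1 else l)) = (r <= l) by case: (leqP r l) => *; lia.
    apply/eqP; rewrite (Rip r l HR Lτ) -Dτ; lia.
  + by rewrite last_rcons HR.
Qed.

Theorem lemma2p2 (n k i j : nat) (s : seq nat) :
  1 <= n -> i <= n - 1 -> j <= k ->
  Gamma k n i j s ->
  Gamma k n (iprime n k i j) (jprime n k i j) (phi k s).
Proof.
move=> Hn _ _ G.
have G' := G; case/and3P: G' => As /eqP Di /eqP Lj.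
have Sz : size s = n by move: As => /andP[]; rewrite is_permP => /and3P[_ /eqP].
have Ej : Posz j = (Posz (last 0 s) - Posz n + Posz k)%R by rewrite Lj; lia.
rewrite /phi Sz -Di Ej; exact: main.
Qed.
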